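(* Let $2\le k<n$, $w=n-k$, and suppose there is an $(n,w,n-1)_q$ code of size $\frac{n(n-1)}{k(k-1)}$. Let $$R=\frac{(n-1)(n-k)}{k(k-1)},\qquad \widetilde P=\frac{(n-1)\big((n-k^2)(n-1)+k(k-1)^2\big)}{2k^2(k-1)^2},$$ $a=\lfloor R/(q-1)\rfloor$ and $b=R-a(q-1)$. Then $(q-1)\binom{a}{2}+ba\le\lfloor\widetilde P\rfloor$, and in particular $q-1\ge R-\lfloor\widetilde P\rfloor$.
   Context: $\mathbb{Z}_q=\{0,\dots,q-1\}$ (an alphabet); $\mathrm{wt}$ = number of nonzero coordinates; $d$ = Hamming distance; $J_q(n,w)$ = weight-$w$ words of $\mathbb{Z}_q^n$. An $(n,w,d)_q$ code of size $M$ is a subset $C\subseteq J_q(n,w)$ with $|C|=M$ and pairwise distances at least $d$. *)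

(* Defs.v *)
From mathcomp Require Import all_boot all_order all_algebra.
Set Implicit Arguments. Unset Strict Implicit. Unset Printing Implicit Defensive.
Import Order.TTheory GRing.Theory Num.Theory.

Definition word (n q : nat) := {ffun 'I_n -> 'I_q}.

Definition wt (n q : nat) (x : word n q) : nat := #|[set i | val (x i) != 0%N]|.

Definition hdist (n q : nat) (x y : word n q) : nat := #|[set i | x i != y i]|.

Definition is_code (n q w d : nat) (C : {set word n q}) : Prop :=
  (forall x, x \in C -> wt x = w) /\
  (forall x y, x \in C -> y \in C -> x != y -> d <= hdist x y).

(* Main.v *)
Require Import Defs.
From mathcomp Require Import all_boot all_order all_algebra.
Import Order.TTheory GRing.Theory Num.Theory.
From mathcomp Require Import zify ring lra.
Lemma sum_bool_card (T : finType) (P : pred T) : \sum_(i : T) (P i : nat) = #|[set i | P i]|.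
Proof. by rewrite -sum1dep_card [RHS]big_mkcond /=; apply: eq_bigr => i _; case: (P i). Qed.

Lemma sum_eqv (T : finType) (P : pred T) (t : T) : \sum_(v | P v) (t == v : nat) = P t.
Proof.
case ht: (P t).
  rewrite (bigD1 t) //= eqxx big1 // => v /andP[_ /negbTE]; by rewrite eq_sym => ->.
rewrite big1 // => v Pv; case: eqP => // tv; by rewrite tv Pv in ht.
Qed.

Lemma sum_eqv2 (T : finType) (t u : T) : \sum_v ((t == v) * (u == v))%N = (t == u).
Proof.
rewrite (eq_bigr (fun v => nat_of_bool (t == v) * nat_of_bool (t == u))%N); last first.
  by move=> v _; case: (eqVneq t v) => [->|vt]; rewrite ?mul1n ?mul0n // eq_sym.
by rewrite -big_distrl /= sum_eqv mul1n. 
Qed.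

Lemma tangent (Q a : nat) (f : 'I_Q -> nat) :
  ((2*a+1) * \sum_(j < Q) f j <= \sum_(j < Q) (f j * f j) + Q*(a*(a+1)))%N.
Proof.
rewrite big_distrr /=.
have -> : (Q * (a * (a + 1)) = \sum_(j < Q) (a * (a+1)))%N by rewrite sum_nat_const card_ord.
rewrite -big_split /=; apply: leq_sum => j _.
case: (leqP (f j) a) => h; nia.
Qed.

Lemma comb (n k Q : nat) (C : {set word n Q.+1}) :
  (2 <= k)%N -> (k < n)%N -> is_code (n-k) (n-1) C ->
  (#|C| * (k*(k-1)) = n*(n-1))%N ->
  exists r Rn : nat, (r*(k-1) = n-1 /\ Rn + r = #|C| /\
    forall a, n*((2*a+1)*Rn) + n*(r*r) <= #|C|*(#|C| + (n-1)) + n*(Q*(a*(a+1))))%N.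
Proof.
move=> k2 kn [hw hd] hM.
set M := #|C|.
pose z (x : word n Q.+1) i : nat := (x i == ord0).
pose cnt i v := (\sum_(x in C) (x i == v : nat))%N.
have zk : forall x, x \in C -> \sum_i z x i = k.
  move=> x /hw; rewrite /wt => hwx.
  rewrite /z sum_bool_card.
  have := cardsC [set i | x i == ord0]; rewrite card_ord.
  have -> : ~: [set i | x i == ord0] = [set i | val (x i) != 0%N] by apply/setP => i; rewrite !inE.
  rewrite hwx => h; apply: (@addIn (n-k)); rewrite h; lia.
have agree : forall x y, x \in C -> y \in C -> \sum_i (x i == y i : nat) <= 1 + (n-1)*(x == y).
  move=> x y xC yC; rewrite sum_bool_card.
  case: (eqVneq x y) => [->|xy].
    rewrite muln1; apply: leq_trans (max_card _) _; rewrite card_ord; lia.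
  have h : n - 1 <= #|[set i | x i != y i]| := hd _ _ xC yC xy.
  have hc : #|[set i | x i == y i]| + #|[set i | x i != y i]| = n.
    transitivity (#|[set i | x i == y i]| + #|~: [set i | x i == y i]|); last by rewrite cardsC card_ord.
    by congr (_ + _); apply: eq_card => i; rewrite !inE.
  change (#|[set i | x i == y i]| <= 1 + (n - 1) * 0); lia.
have Nle1 : forall i j, i != j -> \sum_(x in C) z x i * z x j <= 1.
  move=> i j ij.
  rewrite big_mkcond /=.
  rewrite (eq_bigr (fun x => nat_of_bool ((x \in C) && (x i == ord0) && (x j == ord0)))); last first.
    by move=> x _; rewrite /z; case: (x \in C); case: (x i == ord0); case: (x j == ord0).
  rewrite sum_bool_card; apply/card_le1_eqP => x y; rewrite !inE.
  move=> /andP[/andP[xC xi] xj] /andP[/andP[yC yi] yj].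
  case: (eqVneq x y) => // xy; exfalso.
  have h : n - 1 <= #|[set l | x l != y l]| := hd _ _ xC yC xy.
  have hs : [set l | x l != y l] \subset ~: [set i; j].
    apply/subsetP => l; rewrite !inE; apply: contra => /orP[] /eqP ->.
      by rewrite (eqP xi) (eqP yi).
    by rewrite (eqP xj) (eqP yj).
  have hc := cardsC [set i; j]; rewrite cards2 ij card_ord in hc.
  have := subset_leq_card hs; lia.
have ck : forall i, cnt i ord0 * (k-1) <= n-1.
  move=> i.
  have e : forall x, x \in C -> z x i * (k-1) = \sum_(j | j != i) z x i * z x j.
    move=> x xC; rewrite -big_distrr /=.
    have := zk x xC; rewrite (bigD1 i) //=.
    by rewrite /z; case: (x i == ord0) => /= h; rewrite ?mul0n ?mul1n //; lia.
  rewrite /cnt big_distrl /=.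
  rewrite (eq_bigr (fun x => \sum_(j | j != i) z x i * z x j)); last by move=> x xC; rewrite -e.
  rewrite exchange_big /=.
  apply: (@leq_trans (\sum_(j | j != i) 1)).
    by apply: leq_sum => j ji; apply: Nle1; rewrite eq_sym.
  rewrite sum1dep_card.
  have -> : [set j | j != i] = [set~ i] by apply/setP => j; rewrite !inE.
  by rewrite cardsC1 card_ord subn1.
have csum : \sum_i cnt i ord0 = M * k.
  rewrite /cnt exchange_big /= (eq_bigr (fun _ => k)); last by move=> x xC; rewrite -(zk x xC).
  by rewrite sum_nat_const.
have kpos : 0 < k - 1 by lia.
have cr : forall i, cnt i ord0 * (k-1) = n-1.
  have : \sum_i (n-1 - cnt i ord0 * (k-1)) == 0.
    rewrite sumnB; last by move=> i _; apply: ck.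
    rewrite -big_distrl /= csum sum_nat_const card_ord -mulnA hM.
    by rewrite subnn.
  rewrite sum_nat_eq0 => /forallP h i.
  have := h i; have := ck i; rewrite /=; lia.
have n0 : 0 < n by lia.
pose i0 : 'I_n := Ordinal n0.
pose r := cnt i0 ord0.
have cri : forall i, cnt i ord0 = r.
  move=> i; apply/eqP; rewrite -(eqn_pmul2r kpos) cr /r cr //.
have tot : forall i, \sum_v cnt i v = M.
  move=> i; rewrite /cnt exchange_big /= (eq_bigr (fun _ => 1)).
    by rewrite sum1_card.
  by move=> x _; exact: (sum_eqv _ xpredT (x i)).
pose T i := \sum_(j < Q) cnt i (lift ord0 j) * cnt i (lift ord0 j).
have sR : forall i, \sum_(j < Q) cnt i (lift ord0 j) + r = M.
  by move=> i; rewrite -(tot i) big_ord_recl cri addnC.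
have Sq : forall i, \sum_v cnt i v * cnt i v = \sum_(x in C) \sum_(y in C) (x i == y i : nat).
  move=> i.
  transitivity (\sum_v \sum_(x in C) \sum_(y in C) ((x i == v) * (y i == v))).
    apply: eq_bigr => v _; rewrite /cnt big_distrl /=; apply: eq_bigr => x _; by rewrite big_distrr.
  rewrite exchange_big /=; apply: eq_bigr => x _; rewrite exchange_big /=; apply: eq_bigr => y _.
  exact: sum_eqv2.
have Tot : \sum_i \sum_v cnt i v * cnt i v <= M * (M + (n-1)).
  rewrite (eq_bigr _ (fun i _ => Sq i)) exchange_big /=.
  apply: (@leq_trans (\sum_(x in C) \sum_(y in C) (1 + (n-1)*(x==y)))).
    apply: leq_sum => x xC; rewrite exchange_big /=; apply: leq_sum => y yC; exact: agree.
  rewrite (eq_bigr (fun _ => M + (n-1))); first by rewrite sum_nat_const.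
  move=> x xC; rewrite big_split /= sum1_card -big_distrr /=.
  by rewrite (sum_eqv _ (fun y => y \in C) x) xC muln1.
exists r, (\sum_(j < Q) cnt i0 (lift ord0 j)); split; first exact: cr.
split; first exact: sR.
move=> a.
have Tsplit : \sum_i \sum_v cnt i v * cnt i v = n * (r * r) + \sum_i T i.
  rewrite (eq_bigr (fun i => r * r + T i)); last by move=> i _; rewrite big_ord_recl cri.
  by rewrite big_split /= sum_nat_const card_ord.
have Tan : n * ((2*a+1) * \sum_(j < Q) cnt i0 (lift ord0 j)) <= \sum_i T i + n * (Q*(a*(a+1))).
  have cst : forall c, \sum_(i < n) c = n * c by move=> c; rewrite sum_nat_const card_ord.
  rewrite -!cst -big_split /=; apply: leq_sum => i _.
  have -> : \sum_(j < Q) cnt i0 (lift ord0 j) = \sum_(j < Q) cnt i (lift ord0 j).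
    by apply/eqP; rewrite -(eqn_add2r r) !sR.
  exact: tangent.
lia.
Qed.

Local Open Scope ring_scope.

Theorem mainTheorem17 (n k q : nat) (C : {set word n q}) :
  (2 <= k)%N -> (k < n)%N ->
  is_code (n - k) (n - 1) C ->
  (#|C|%:R : rat) = (n%:R * (n%:R - 1)) / (k%:R * (k%:R - 1)) ->
  let R : rat := ((n%:R - 1) * (n%:R - k%:R)) / (k%:R * (k%:R - 1)) in
  let Pt : rat := ((n%:R - 1) * ((n%:R - k%:R ^+ 2) * (n%:R - 1)
                      + k%:R * (k%:R - 1) ^+ 2))
                  / (2 * k%:R ^+ 2 * (k%:R - 1) ^+ 2) in
  let a : int := Num.floor (R / (q%:R - 1)) in
  let b : rat := R - a%:~R * (q%:R - 1) in
  (q%:R - 1) * (a%:~R * (a%:~R - 1) / 2) + b * a%:~R <= (Num.floor Pt)%:~R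
  /\ R - (Num.floor Pt)%:~R <= q%:R - 1.
Proof.
move=> k2 kn hC hM.
have k1 : (1 <= k)%N by lia.
have n1 : (1 <= n)%N by lia.
have kR : k%:R != 0 :> rat by rewrite pnatr_eq0; lia.
have k1R : k%:R - 1 != 0 :> rat by rewrite subr_eq0 pnatr_eq1; lia.
have nR : n%:R != 0 :> rat by rewrite pnatr_eq0; lia.
have hMnat : (#|C| * (k*(k-1)) = n*(n-1))%N.
  apply/eqP; rewrite -(@eqr_nat rat) !natrM (natrB _ k1) (natrB _ n1) hM; apply/eqP.
  by field; rewrite k1R kR.
have Mpos : (0 < #|C|)%N.
  have : (0 : rat) < (n*(n-1))%:R.
    by rewrite ltr0n muln_gt0; apply/andP; split; lia.
  by rewrite -hMnat ltr0n muln_gt0 => /andP[].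
case/card_gt0P: Mpos => x xC.
have q2 : (1 < q)%N.
  have := (proj1 hC) x xC; rewrite /wt => hw.
  have : (0 < #|[set i | val (x i) != 0%N]|)%N by rewrite hw subn_gt0.
  case/card_gt0P => i; rewrite inE => hi.
  by apply: (leq_ltn_trans _ (ltn_ord (x i))); rewrite lt0n.
case: q C hC hM hMnat x xC q2 => [|[|Q]] // C hC hM hMnat _ _ _.
have [r [Rn [hr [hRn hall]]]] := comb _ _ _ _ k2 kn hC hMnat.
move=> R Pt a b.
have hr' : r%:R = (n%:R - 1) / (k%:R - 1) :> rat.
  have := congr1 (fun m => m%:R : rat) hr; rewrite /= natrM (natrB _ k1) (natrB _ n1) => e.
  by rewrite -e mulfK.
have hRn' : Rn%:R = #|C|%:R - r%:R :> rat by rewrite -hRn natrD addrK.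
have Req : R = Rn%:R by rewrite /R hRn' hM hr'; field; rewrite k1R kR.
have Q1 : Q.+2%:R - 1 = Q.+1%:R :> rat by rewrite -addn1 natrD addrK.
rewrite /b /a Q1 Req.
have Q1pos : 0 < Q.+1%:R :> rat by rewrite ltr0n.
have fl0 : 0 <= Num.floor (Rn%:R / Q.+1%:R : rat) by rewrite floor_ge0 divr_ge0.
have [an han] : exists an : nat, Num.floor (Rn%:R / Q.+1%:R : rat) = an%:Z.
  by case: (Num.floor _) fl0 => [m _|m //]; exists m.
have hlo : an%:R * Q.+1%:R <= Rn%:R :> rat.
  have := floor_le (Rn%:R / Q.+1%:R : rat); rewrite han -pmulrn => h.
  by rewrite -ler_pdivlMr.
have hhi : Rn%:R < (an%:R + 1) * Q.+1%:R :> rat.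
  have := floorD1_gt (Rn%:R / Q.+1%:R : rat); rewrite han => h.
  by rewrite -ltr_pdivrMr // (_ : an%:R + 1 = (an%:Z + 1)%:~R) // intrD -pmulrn.
rewrite han -pmulrn.
pose t := (an * an.+1)./2.
have et : (t%:R : rat) = an%:R * (an%:R + 1) / 2.
  have : (t.*2 = an * an.+1)%N by rewrite /t even_halfK // oddM oddS; case: (odd an).
  move=> /(congr1 (fun m => m%:R : rat)); rewrite /= -muln2 natrM natrM -[an.+1%:R]natr1 => e.
  by rewrite -e mulfK.
have hP : an%:R * Rn%:R - Q.+1%:R * (an%:R * (an%:R + 1) / 2) <= Pt.
  have h' : ((n * ((2 * an + 1) * Rn) + n * (r * r))%:R <= (#|C| * (#|C| + (n - 1)) + n * (Q.+1 * (an * (an + 1))))%:R :> rat) by rewrite ler_nat; exact: hall.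
  rewrite ?natrD ?natrM ?natrD ?natrM ?natrD (natrB _ n1) in h'.
  have ePt : Pt = (#|C|%:R * (#|C|%:R + (n%:R - 1)) - n%:R * (r%:R * r%:R) - n%:R * Rn%:R) / (2 * n%:R).
    by rewrite /Pt hRn' hM hr'; field; rewrite ?kR ?k1R ?nR.
  rewrite ePt ler_pdivlMr; last by rewrite mulr_gt0 // ltr0n.
  lra.
have eL : (Q.+1%:R : rat) * (an%:R * (an%:R - 1) / 2) + (Rn%:R - an%:R * Q.+1%:R) * an%:R = ((an*Rn)%:Z - (Q.+1 * t)%:Z)%:~R :> rat.
  by rewrite intrB -!pmulrn !natrM et; field.
have G1 : (Q.+1%:R : rat) * (an%:R * (an%:R - 1) / 2) + (Rn%:R - an%:R * Q.+1%:R) * an%:R <= (Num.floor Pt)%:~R.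
  rewrite eL ler_int floor_ge_int -eL; apply: le_trans hP; rewrite le_eqVlt; apply/orP; left; apply/eqP; by field.
split => //.
suff : Rn%:R - Q.+1%:R <= Q.+1%:R * (an%:R * (an%:R - 1) / 2) + (Rn%:R - an%:R * Q.+1%:R) * an%:R :> rat by lra.
have hb : 0 <= Rn%:R - an%:R * Q.+1%:R :> rat by lra.
move: hb hhi hlo; clear -Q1pos; case: an => [|[|m]] hb hhi hlo.
- rewrite !mulr0n in hhi hb *; lra.
- lra.
have -> : m.+2%:R = m%:R + 2 :> rat by rewrite -[m.+2]addn2 natrD.
have m0 : 0 <= m%:R :> rat by rewrite ler0n.
rewrite -[m.+2]addn2 natrD in hb.
have := mulr_ge0 (mulr_ge0 (ltW Q1pos) (_ : 0 <= m%:R + 1)) m0.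
have := mulr_ge0 hb (_ : 0 <= m%:R + 1).
lra.
Qed.
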